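(* Let $p$ be a graph parameter such that $p(G\uplus H)=\max(p(G),p(H))$ for all graphs $G,H$ (where $\uplus$ is disjoint union). Let $\mathcal{A}$ be a class of structures of bounded arity $r$ such that the class of Gaifman graphs of structures in $\mathcal{A}$ is fractionally-$p$-fragile. Then $\mathcal{A}$ is $p$-pliable.
   Context: A $\sigma$-structure $\mathbb{A}$ is a finite domain $A$ with functions $f^{\mathbb{A}}\colon A^{\mathrm{ar}(f)}\to\mathbb{Q}_{\ge0}$, $f\in\sigma$; bounded arity $r$ means $\mathrm{ar}(f)\le r$ for all symbols. $\mathrm{opt}(\mathbb{A},\mathbb{B})=\max_{h\colon A\to B}\sum_{f}\sum_{\bar x}f^{\mathbb{A}}(\bar x)f^{\mathbb{B}}(h(\bar x))$ over all maps; $d_{\mathrm{opt}}(\mathbb{A},\mathbb{B})=\sup_{\mathbb{C}}|\ln\mathrm{opt}(\mathbb{A},\mathbb{C})-\ln\mathrm{opt}(\mathbb{B},\mathbb{C})|$ over $\sigma$-structures $\mathbb{C}$ ($\ln0=-\infty$, $|\ln0-\ln0|=0$). The Gaifman graph of $\mathbb{A}$ has vertex set $A$, with distinct $u,v$ adjacent iff they occur together in a tuple $\bar x$ with $f^{\mathbb{A}}(\bar x)>0$; $p(\mathbb{A})$ is $p$ of the Gaifman graph. $\mathcal{A}$ is $p$-pliable if for every $\varepsilon>0$ there is $k$ such that every $\mathbb{A}\in\mathcal{A}$ (signature $\sigma$) has a $\sigma$-structure $\mathbb{B}$ with $p(\mathbb{B})\le k$ and $d_{\mathrm{opt}}(\mathbb{A},\mathbb{B})\le\varepsilon$.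 A class of graphs $\mathcal{G}$ is fractionally-$p$-fragile if for every $\varepsilon>0$ there is $k$ such that every $G\in\mathcal{G}$ has a probability distribution $\pi$ over sets $X\subseteq V(G)$ with $p(G-X)\le k$ such that $\Pr_{X\sim\pi}[v\in X]\le\varepsilon$ for every $v\in V(G)$. *)

(* Defs.v *)
From HB Require Import structures.
From mathcomp Require Import all_boot all_order all_algebra.
From mathcomp Require Import all_classical all_reals all_analysis.
Set Implicit Arguments. Unset Strict Implicit. Unset Printing Implicit Defensive.
Import Order.TTheory GRing.Theory Num.Theory.
Local Open Scope ring_scope.

Record graph := Graph {
  gV : finType;
  gE : rel gV;
  gE_sym : symmetric gE;
  gE_irr : irreflexive gE }.

Definition graph_iso (G H : graph) : Prop :=
  exists f : gV G -> gV H, bijective f /\ forall x y, gE (f x) (f y) = gE x y.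

Definition graph_parameter (p : graph -> nat) : Prop :=
  forall G H, graph_iso G H -> p G = p H.

Definition sum_rel (G H : graph) : rel (gV G + gV H) :=
  fun x y => match x, y with
             | inl a, inl b => gE a b
             | inr a, inr b => gE a b
             | _, _ => false end.

Lemma sum_rel_sym G H : symmetric (@sum_rel G H).
Proof. by case=> a [] b //=; apply: gE_sym. Qed.

Lemma sum_rel_irr G H : irreflexive (@sum_rel G H).
Proof. by case=> a /=; apply: gE_irr. Qed.

Definition disj_union (G H : graph) : graph :=
  Graph (@sum_rel_sym G H) (@sum_rel_irr G H).

Definition del_rel (G : graph) (X : {set gV G}) : rel {x : gV G | x \notin X} :=
  fun x y => gE (val x) (val y).

Lemma del_rel_sym G X : symmetric (@del_rel G X).
Proof. by move=> x y; rewrite /del_rel gE_sym. Qed.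

Lemma del_rel_irr G X : irreflexive (@del_rel G X).
Proof. by move=> x; rewrite /del_rel gE_irr. Qed.

Definition del_graph (G : graph) (X : {set gV G}) : graph :=
  Graph (@del_rel_sym G X) (@del_rel_irr G X).

Record signature := Signature { ssym : finType; sar : ssym -> nat }.

Record structure (s : signature) := Struct {
  sdom : finType;
  sfun : forall f : ssym s, (sar f).-tuple sdom -> rat;
  sfun_ge0 : forall (f : ssym s) (x : (sar f).-tuple sdom), 0 <= sfun x }.

(* opt(A,B) = max over all maps h : A -> B (max over the empty set is 0) *)
Definition opt (s : signature) (A B : structure s) : rat :=
  \big[Num.max/0]_(h : {ffun sdom A -> sdom B})
     \sum_(f : ssym s) \sum_(x : (sar f).-tuple (sdom A))
        sfun x * sfun (map_tuple h x).

(* |ln a - ln b| with conventions ln 0 = -oo and |ln 0 - ln 0| = 0 *)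
Definition ln_dist (R : realType) (a b : rat) : \bar R :=
  if (a == 0) && (b == 0) then 0%E
  else if (a == 0) || (b == 0) then +oo%E
  else (`| ln (ratr a : R) - ln (ratr b) |)%:E.

Definition d_opt (R : realType) (s : signature) (A B : structure s) : \bar R :=
  ereal_sup [set x : \bar R | exists C : structure s, x = ln_dist R (opt A C) (opt B C)].

Definition gaif_rel (s : signature) (A : structure s) : rel (sdom A) :=
  fun u v => (u != v) &&
    [exists f : ssym s, [exists x : (sar f).-tuple (sdom A),
        (0 < sfun x) && (u \in x) && (v \in x)]].

Lemma gaif_rel_sym s (A : structure s) : symmetric (@gaif_rel s A).
Proof.
move=> u v; rewrite /gaif_rel eq_sym; congr (_ && _).
apply/existsP/existsP=> [][f /existsP [x Hx]]; exists f; apply/existsP; exists x;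
  by move: Hx; case: (0 < _) (u \in x) (v \in x) => [] [] [].
Qed.

Lemma gaif_rel_irr s (A : structure s) : irreflexive (@gaif_rel s A).
Proof. by move=> u; rewrite /gaif_rel eqxx. Qed.

Definition gaifman (s : signature) (A : structure s) : graph :=
  Graph (@gaif_rel_sym s A) (@gaif_rel_irr s A).

Definition struct_class := forall s : signature, structure s -> Prop.

Definition frac_fragile (R : realType) (p : graph -> nat) (GG : graph -> Prop) : Prop :=
  forall eps : R, 0 < eps -> exists k : nat, forall G : graph, GG G ->
    exists pi : {ffun {set gV G} -> R},
      [/\ forall X, 0 <= pi X,
          \sum_(X : {set gV G}) pi X = 1,
          forall X, 0 < pi X -> (p (del_graph X) <= k)%N &
          forall v : gV G, \sum_(X : {set gV G} | v \in X) pi X <= eps].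

Definition gaifman_class (AA : struct_class) (G : graph) : Prop :=
  exists s (A : structure s), AA s A /\ G = gaifman A.

Definition pliable (R : realType) (p : graph -> nat) (AA : struct_class) : Prop :=
  forall eps : R, 0 < eps -> exists k : nat, forall s (A : structure s), AA s A ->
    exists B : structure s, (p (gaifman B) <= k)%N /\ (d_opt R A B <= eps%:E)%E.

(* Main.v *)
From Pilot Require Import Defs.
From HB Require Import structures.
From mathcomp Require Import all_boot all_order all_algebra.
From mathcomp Require Import all_classical all_reals all_analysis.
From mathcomp Require Import ring lra.
Import Pilot.Defs.
Import Order.TTheory GRing.Theory Num.Theory.
Local Open Scope ring_scope.
Set Implicit Arguments. Unset Strict Implicit. Unset Printing Implicit Defensive.

Lemma bij_of (T T' : finType) (f : T -> T') :
  injective f -> (forall y, exists x, f x = y) -> bijective f.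
Proof.
move=> fi fs; apply: (inj_card_bij fi).
have [g Hg] := fin_all_exists fs.
apply: (@leq_card _ _ g); apply: (@can_inj _ _ _ f) => y; exact: Hg.
Qed.

Lemma iso_of (G H : graph) (f : gV G -> gV H) :
  injective f -> (forall y, exists x, f x = y) ->
  (forall x y, gE (f x) (f y) = gE x y) -> graph_iso G H.
Proof. by move=> fi fs fe; exists f; split=> //; apply: bij_of. Qed.

Lemma iso_all (H : graph) (Y : {set gV H}) :
  (forall x, x \in Y) -> graph_iso (del_graph (~: Y)) H.
Proof.
move=> HY; apply: (@iso_of (del_graph (~: Y)) H val) => //=.
- exact: val_inj.
- move=> y; have hy : y \notin ~: Y by rewrite finset.in_setC negbK.
  by exists (Sub y hy).
Qed.

Lemma iso_split (H : graph) (Y : {set gV H}) :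
  (forall x y, x \in Y -> y \notin Y -> gE x y = false) ->
  graph_iso (disj_union (del_graph (~: Y)) (del_graph Y)) H.
Proof.
move=> HY.
pose f (z : gV (disj_union (del_graph (~: Y)) (del_graph Y))) : gV H :=
  match z with inl a => val a | inr b => val b end.
apply: (@iso_of _ _ f).
- case=> [a|b] [a'|b'] /= E.
  + by rewrite (val_inj E).
  + have ha := valP a; have hb := valP b'; move: ha hb.
    by rewrite /= E finset.in_setC negbK => ->.
  + have ha := valP b; have hb := valP a'; move: ha hb.
    by rewrite /= -E finset.in_setC negbK => /negP.
  + by rewrite (val_inj E).
- move=> y; case: (boolP (y \in Y)) => hy.
  + have hy' : y \notin ~: Y by rewrite finset.in_setC negbK.
    by exists (inl (Sub y hy')).
  + by exists (inr (Sub y hy)).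
- case=> [a|b] [a'|b'] //=.
  + apply: HY (valP b'). by have := valP a; rewrite finset.in_setC negbK.
  + rewrite gE_sym; apply: HY (valP b).
    by have := valP a'; rewrite finset.in_setC negbK.
Qed.

Lemma p_labels (p : graph -> nat) (k : nat) (I : finType) :
  graph_parameter p ->
  (forall G H : graph, p (disj_union G H) = maxn (p G) (p H)) ->
  forall n (H : graph) (c : gV H -> I),
  (#|[set c x | x in gV H]| <= n)%N ->
  (forall x y, gE x y -> c x = c y) ->
  (forall x, (p (del_graph (~: [set y | c y == c x])) <= k)%N) ->
  forall x0 : gV H, (p H <= k)%N.
Proof.
move=> Hp Hu; elim=> [|n IH] H c Hn Hc Hk x0.
  move: Hn; rewrite leqn0 cards_eq0 => /eqP E.
  have : c x0 \in [set c x | x in gV H] by apply: imset_f.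
  by rewrite E inE.
set Y := [set y | c y == c x0].
case: (boolP [forall y, y \in Y]) => [/forallP hall|].
  by rewrite -(Hp _ _ (iso_all hall)); apply: Hk.
rewrite negb_forall => /existsP [y1 hy1].
have hs : forall x y, x \in Y -> y \notin Y -> gE x y = false.
  move=> x y hx hy; apply/negP => /Hc E; move: hx hy; rewrite !inE E => ->.
  by [].
rewrite -(Hp _ _ (iso_split hs)) Hu geq_max Hk /=.
pose H' := del_graph Y.
pose c' (z : gV H') := c (val z).
have hy1' : y1 \notin Y := hy1.
apply: (IH H' c' _ _ _ (Sub y1 hy1' : gV H')).
- rewrite -ltnS; apply: leq_trans Hn; apply: proper_card.
  apply/fintype.properP; split.
    apply/fintype.subsetP=> i /imsetP [z _ ->]; by apply: imset_f.
  exists (c x0); first by apply: imset_f.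
  apply/imsetP=> [[z _ E]]; have := valP z; rewrite /Y inE.
  by move=> /negP []; apply/eqP; exact: (esym E).
- by move=> x y /Hc.
- move=> x.
  suff -> : p (@del_graph H' (~: [set y | c' y == c' x])) =
            p (del_graph (~: [set y | c y == c (val x)])) by apply: Hk.
  apply: Hp.
  have gP : forall z : gV (@del_graph H' (~: [set y | c' y == c' x])),
      val (val z) \notin ~: [set y | c y == c (val x)].
    by move=> z; have := valP z; rewrite !finset.in_setC !inE.
  pose g (z : gV (@del_graph H' (~: [set y | c' y == c' x]))) :=
      (Sub (val (val z)) (gP z) : gV (del_graph (~: [set y | c y == c (val x)]))).
  apply: (@iso_of _ _ g).
  + move=> z1 z2 /(congr1 val) /= /val_inj /val_inj; exact.
  + move=> w; have hw : val w \notin Y.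
      have := valP w; rewrite /Y !finset.in_setC !inE negbK => /eqP ->.
      by have := valP x; rewrite /Y inE.
    have hw' : (Sub (val w) hw : gV H') \notin ~: [set y | c' y == c' x].
      by have := valP w; rewrite !finset.in_setC !inE.
    by exists (Sub (Sub (val w) hw) hw'); apply: val_inj.
  + by [].
Qed.

Lemma bigmax_ge (I : finType) (F : I -> rat) j : F j <= \big[Num.max/0]_(i : I) F i.
Proof.
have : j \in index_enum I by apply: mem_index_enum.
elim: (index_enum I) => [//|a l IH]; rewrite inE big_cons /= => /orP [/eqP ->|/IH h].
  by rewrite le_max lexx.
by rewrite le_max h orbT.
Qed.

Lemma bigmax_ge0 (I : finType) (F : I -> rat) : 0 <= \big[Num.max/0]_(i : I) F i.
Proof.
elim: (index_enum I) => [|a l IH]; first by rewrite big_nil.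
by rewrite big_cons le_max IH orbT.
Qed.

Lemma bigmax_le (I : finType) (F : I -> rat) M :
  0 <= M -> (forall i, F i <= M) -> \big[Num.max/0]_(i : I) F i <= M.
Proof.
move=> h0 hF; apply: (big_ind (fun x => x <= M)) => //.
by move=> x y hx hy; rewrite ge_max hx hy.
Qed.

Lemma bigmax_cases (I : finType) (F : I -> rat) :
  \big[Num.max/0]_(i : I) F i = 0 \/ exists i, \big[Num.max/0]_(i : I) F i = F i.
Proof.
apply: (big_ind (fun x => x = 0 \/ exists i, x = F i)); [by left| |by move=> i _; right; exists i].
move=> x y hx hy; case: (lerP x y) => _; by [].
Qed.

Lemma sum_ge_term (I : finType) (F : I -> rat) j :
  (forall i, 0 <= F i) -> F j <= \sum_i F i.
Proof.
by move=> h; rewrite (bigD1 j) //= lerDl sumr_ge0.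
Qed.

Lemma sum_pos (I : finType) (F : I -> rat) :
  (forall i, 0 <= F i) -> 0 < \sum_i F i -> exists i, 0 < F i.
Proof.
move=> h hs; case: (pselect (exists i, 0 < F i)) => // hn; move: hs.
rewrite big1 ?ltxx // => i _; apply/eqP; rewrite eq_le h andbT.
by rewrite leNgt; apply/negP => hi; apply: hn; exists i.
Qed.

Lemma sum_uniq (T : finType) (P : pred T) (F : T -> rat) c :
  (forall t1 t2, P t1 -> P t2 -> t1 = t2) -> (forall t, P t -> F t <= c) -> 0 <= c ->
  \sum_t (P t)%:R * F t <= c.
Proof.
move=> hu hF hc; case: (pickP P) => [t0 Pt0|hn].
  rewrite (bigD1 t0) //= big1 ?addr0 ?Pt0 ?mul1r ?hF // => t ht.
  case Pt: (P t); last by rewrite mul0r.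
  by move: ht; rewrite (hu _ _ Pt Pt0) eqxx.
by rewrite big1 // => t _; rewrite hn mul0r.
Qed.

Lemma sum_ge_one (T : finType) (P : pred T) (F : T -> rat) t0 :
  P t0 -> (forall t, 0 <= F t) -> F t0 <= \sum_t (P t)%:R * F t.
Proof.
move=> h0 hF; have := @sum_ge_term _ (fun t => (P t)%:R * F t) t0.
by rewrite h0 mul1r; apply => t; rewrite mulr_ge0.
Qed.

Definition subX (V : finType) (X : {set V}) n (s : n.-tuple V) : n.-tuple V :=
  map_tuple (fun y => if y \in X then odflt y [pick z | (z \in s) && (z \notin X)] else y) s.

Definition cw (V : finType) (X : {set V}) n (s : n.-tuple V) (d : rat) : rat :=
  if all (fun y => y \notin X) s then 1 else d.

Definition Bdom (V : finType) (q : {ffun {set V} -> rat}) :=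
  {xv : {set V} * V | (xv.2 \notin xv.1) && (0 < q xv.1)}.

Definition Bfun s (A : structure s) (q : {ffun {set sdom A} -> rat}) (d : rat)
  (f : ssym s) (t : (sar f).-tuple (Bdom q)) : rat :=
  \sum_(X : {set sdom A}) q X * \sum_(u : (sar f).-tuple (sdom A))
     sfun u * cw X u d * (map val t == map (pair X) (subX X u))%:R.

Lemma cw_ge0 (V : finType) (X : {set V}) n (u : n.-tuple V) d : 0 <= d -> 0 <= cw X u d.
Proof. by rewrite /cw; case: ifP. Qed.

Lemma Bfun_ge0 s (A : structure s) (q : {ffun {set sdom A} -> rat}) d :
  (forall X, 0 <= q X) -> 0 <= d -> forall f t, 0 <= @Bfun s A q d f t.
Proof.
move=> hq hd f t; apply: sumr_ge0 => X _; rewrite mulr_ge0 //.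
apply: sumr_ge0 => u _; rewrite !mulr_ge0 ?sfun_ge0 ?cw_ge0 //.
Qed.

Definition Bstr s (A : structure s) (q : {ffun {set sdom A} -> rat}) d
  (hq : forall X, 0 <= q X) (hd : 0 <= d) : structure s :=
  @Struct s (Bdom q) (@Bfun s A q d) (Bfun_ge0 hq hd).

Definition valA s (A C : structure s) (h : {ffun sdom A -> sdom C}) : rat :=
  \sum_(f : ssym s) \sum_(x : (sar f).-tuple (sdom A)) sfun x * sfun (map_tuple h x).

Lemma optE s (A C : structure s) : opt A C = \big[Num.max/0]_h @valA s A C h.
Proof. by []. Qed.

Lemma valA_ge0 s (A C : structure s) h : 0 <= @valA s A C h.
Proof. by apply: sumr_ge0 => f _; apply: sumr_ge0 => x _; rewrite mulr_ge0 ?sfun_ge0. Qed.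

Lemma term_le_opt s (A C : structure s) (f : ssym s) (x : (sar f).-tuple (sdom A)) (h : {ffun sdom A -> sdom C}) :
  sfun x * sfun (map_tuple h x) <= opt A C.
Proof.
apply: le_trans (bigmax_ge _ h).
apply: le_trans (sum_ge_term f _); last first.
  by move=> g; apply: sumr_ge0 => y _; rewrite mulr_ge0 ?sfun_ge0.
apply: (sum_ge_term x (F := fun y => sfun y * sfun (map_tuple h y))).
by move=> y; rewrite mulr_ge0 ?sfun_ge0.
Qed.

Lemma opt_ge0 s (A C : structure s) : 0 <= opt A C.
Proof. exact: bigmax_ge0. Qed.

Lemma subX_mem (V : finType) (X : {set V}) n (u : n.-tuple V) y :
  y \in subX X u -> y \in u.
Proof.
rewrite /subX /= => /mapP [z hz ->]; case: ifP => // _.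
by case: pickP => //= w /andP [].
Qed.

Lemma subX_notin (V : finType) (X : {set V}) n (u : n.-tuple V) z :
  z \in u -> z \notin X -> forall y, y \in subX X u -> y \notin X.
Proof.
move=> hz hzX y; rewrite /subX /= => /mapP [w hw ->]; case: ifP => [_|/negbT //].
case: pickP => /= [v /andP [] //|hn].
by have := hn z; rewrite hz hzX.
Qed.

Lemma subX_keep (V : finType) (X : {set V}) n (u : n.-tuple V) y :
  y \in u -> y \notin X -> y \in subX X u.
Proof.
move=> hy hyX; rewrite /subX /=; apply/mapP; exists y => //.
by rewrite (negbTE hyX).
Qed.

Lemma subX_all (V : finType) (X : {set V}) n (u : n.-tuple V) :
  all (fun y => y \notin X) u -> subX X u = u.
Proof.
move=> /allP h; apply: val_inj => /=; rewrite -[RHS]map_id; apply/eq_in_map => y /h.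
by move/negbTE => ->.
Qed.

Lemma lift_seq (V : finType) (q : {ffun {set V} -> rat}) (X : {set V}) (u : seq V) :
  (forall y, y \in u -> y \notin X) -> 0 < q X ->
  exists s : seq (Bdom q), map val s = map (pair X) u.
Proof.
move=> hu hq; elim: u hu => [|y u IH] hu; first by exists [::].
have [s hs] : exists s : seq (Bdom q), map val s = map (pair X) u.
  by apply: IH => z hz; apply: hu; rewrite inE hz orbT.
have hy : ((X, y).2 \notin (X, y).1) && (0 < q (X, y).1).
  by rewrite /= hq andbT; apply: hu; rewrite inE eqxx.
by exists ((exist _ (X, y) hy : Bdom q) :: s); rewrite /= hs.
Qed.

Lemma lift_tuple (V : finType) (q : {ffun {set V} -> rat}) (X : {set V}) n (u : n.-tuple V) :
  (forall y, y \in u -> y \notin X) -> 0 < q X ->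
  exists t : n.-tuple (Bdom q), map val t = map (pair X) u.
Proof.
move=> hu hq; have [s hs] := lift_seq hu hq.
have hsz : size s == n by rewrite -(size_map val) hs size_map size_tuple.
by exists (Tuple hsz).
Qed.

Lemma tuple_val_inj (V : finType) (q : {ffun {set V} -> rat}) n (t1 t2 : n.-tuple (Bdom q)) :
  map val t1 = map val t2 -> t1 = t2.
Proof. by move=> h; apply: val_inj; apply: (inj_map val_inj). Qed.

Lemma valB_eq s (A C : structure s) (q : {ffun {set sdom A} -> rat}) d hq hd
  (h : {ffun Bdom q -> sdom C}) :
  @valA s (@Bstr s A q d hq hd) C h =
  \sum_(X : {set sdom A}) q X * \sum_(f : ssym s) \sum_(u : (sar f).-tuple (sdom A))
     (sfun u * cw X u d) * \sum_(t : (sar f).-tuple (Bdom q))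
        (map val t == map (pair X) (subX X u))%:R * sfun (map_tuple h t).
Proof.
rewrite /valA /= /Bfun.
under eq_bigr => f _ do under eq_bigr => t _ do rewrite mulr_suml.
under eq_bigr => f _ do rewrite exchange_big /=.
rewrite exchange_big /=; apply: eq_bigr => X _.
rewrite mulr_sumr; apply: eq_bigr => f _.
rewrite mulr_sumr.
under eq_bigr => t _ do rewrite -mulrA mulr_suml mulr_sumr.
rewrite exchange_big /=; apply: eq_bigr => u _.
rewrite !mulr_sumr; apply: eq_bigr => t _.
by rewrite !mulrA.
Qed.

Definition Ncount s (A : structure s) : rat :=
  \sum_(f : ssym s) \sum_(u : (sar f).-tuple (sdom A)) 1.

Lemma Bupper s (A C : structure s) (q : {ffun {set sdom A} -> rat}) (d : rat)
  (hq : forall X, 0 <= q X) (hd : 0 <= d) :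
  \sum_X q X = 1 -> (forall v : sdom A, exists X : {set sdom A}, v \notin X /\ 0 < q X) ->
  opt (@Bstr s A q d hq hd) C <= (1 + d * Ncount A) * opt A C.
Proof.
move=> hQ hB.
have hN : 0 <= Ncount A by apply: sumr_ge0 => f _; apply: sumr_ge0.
have hO := opt_ge0 A C.
rewrite [opt (Bstr _ _) C]optE; apply: bigmax_le.
  by rewrite mulr_ge0 // addr_ge0 // mulr_ge0.
move=> h; rewrite valB_eq.
have [dflt _] : exists dflt : sdom A -> sdom C, True.
  case: (pickP (sdom A)) => [v0 _|hn].
    have [X [hvX hqX]] := hB v0.
    have hb : ((X,v0).2 \notin (X,v0).1) && (0 < q (X,v0).1) by rewrite /= hvX hqX.
    by exists (fun _ => h (exist _ (X, v0) hb)).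
  by exists (fun v => False_rect _ ltac:(by have := hn v)).
pose g X := [ffun v => if insub (X, v) is Some b then h b else dflt v] : {ffun sdom A -> sdom C}.
apply: (@le_trans _ _ (\sum_X q X * ((1 + d * Ncount A) * opt A C))); last first.
  by rewrite -mulr_suml hQ mul1r.
apply: ler_sum => X _; apply: (@ler_wpM2l _ (q X) (hq X)).
apply: (@le_trans _ _ (\sum_(f : ssym s) \sum_(u : (sar f).-tuple (sdom A))
     (sfun u * sfun (map_tuple (g X) u) + d * opt A C))).
  apply: ler_sum => f _; apply: ler_sum => u _.
  have hin : \sum_(t : (sar f).-tuple (Bdom q))
        (map val t == map (pair X) (subX X u))%:R * sfun (map_tuple h t)
      <= sfun (map_tuple (g X) (subX X u)).
    apply: sum_uniq; last exact: sfun_ge0.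
      by move=> t1 t2 /eqP e1 /eqP e2; apply: tuple_val_inj; rewrite e1 e2.
    move=> t /eqP E; suff -> : map_tuple h t = map_tuple (g X) (subX X u) by [].
    move: E; set S := subX X u => E.
    have HS : (S : seq _) = map (fun b => (val b).2) t.
      by rewrite (map_comp snd val) E -map_comp map_id.
    apply: val_inj; rewrite /= HS.
    rewrite -map_comp; apply/eq_in_map => b hb /=.
    have hb1 : (val b).1 = X.
      have : val b \in map val t by apply: map_f.
      by rewrite E => /mapP [y _ ->].
    rewrite ffunE; have -> : (X, (val b).2) = val b by rewrite -hb1; case: (val b).
    by rewrite valK.
  apply: (@le_trans _ _ (sfun u * cw X u d * sfun (map_tuple (g X) (subX X u)))).
    by apply: ler_wpM2l hin; rewrite mulr_ge0 ?sfun_ge0 ?cw_ge0.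
  rewrite /cw; case: ifP => hall.
    by rewrite mulr1 subX_all // lerDl mulr_ge0.
  rewrite [sfun u * d]mulrC -mulrA -[d * _]add0r; apply: lerD.
    by rewrite mulr_ge0 ?sfun_ge0.
  apply: (@ler_wpM2l _ d hd).
  pose phi y := if y \in X then odflt y [pick z | (z \in u) && (z \notin X)] else y.
  have -> : map_tuple (g X) (subX X u) = map_tuple [ffun y => g X (phi y)] u.
    by apply: val_inj; rewrite /= -map_comp; apply/eq_map => y; rewrite /= ffunE.
  exact: term_le_opt.
under eq_bigr => f _ do rewrite big_split /=.
rewrite big_split /= mulrDl mul1r; apply: lerD; first exact: bigmax_ge.
rewrite /Ncount mulrAC [_ * (opt A C)]mulrC mulr_sumr le_eqVlt; apply/orP; left; apply/eqP.
apply: eq_bigr => f _.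
by rewrite mulr_sumr; apply: eq_bigr => u _; rewrite mulr1.
Qed.

Lemma notall_le (V : finType) (X : {set V}) (u : seq V) :
  ((~~ all (fun y => y \notin X) u)%:R : rat) <= \sum_(y <- u) ((y \in X)%:R : rat).
Proof.
elim: u => [|y u IH]; first by rewrite big_nil.
rewrite big_cons /= negb_and negbK; case: (y \in X) => /=.
  by rewrite lerDl sumr_ge0.
by rewrite add0r.
Qed.

Lemma cover_bound (V : finType) (q : {ffun {set V} -> rat}) (m : rat) (r : nat) n
  (u : n.-tuple V) :
  (forall X, 0 <= q X) -> \sum_X q X = 1 -> 0 <= m ->
  (forall v : V, \sum_X q X * (v \in X)%:R <= m) -> (n <= r)%N ->
  1 - r%:R * m <= \sum_X q X * (all (fun y => y \notin X) u)%:R.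
Proof.
move=> hq hQ hm hv hn.
have E : \sum_X q X * (all (fun y => y \notin X) u)%:R =
         1 - \sum_X q X * (~~ all (fun y => y \notin X) u)%:R.
  have E' : \sum_X q X = \sum_X (q X * (all (fun y => y \notin X) u)%:R
                + q X * (~~ all (fun y => y \notin X) u)%:R).
    apply: eq_bigr => X _.
    by case: (all (fun y => y \notin X) u); rewrite /= ?mulr1 ?mulr0 ?addr0 ?add0r.
  rewrite big_split /= hQ in E'; by apply/eqP; rewrite eq_sym subr_eq -E'.
rewrite E lerD2l lerN2.
apply: (@le_trans _ _ (\sum_X q X * \sum_(y <- u) ((y \in X)%:R : rat))).
  by apply: ler_sum => X _; apply: (@ler_wpM2l _ (q X) (hq X)); apply: notall_le.
under eq_bigr => X _ do rewrite mulr_sumr.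
rewrite exchange_big /=.
apply: (@le_trans _ _ (\sum_(y <- u) m)).
  by apply: ler_sum => y _; apply: hv.
rewrite big_const_seq count_predT size_tuple.
have -> : forall k, iter k (+%R m) 0 = k%:R * m.
  by elim=> [|k IH]; rewrite /= ?mul0r // IH -nat1r mulrDl mul1r.
by apply: (@ler_wpM2r _ m hm); rewrite ler_nat.
Qed.

Lemma Blower s (A C : structure s) (q : {ffun {set sdom A} -> rat}) (d : rat)
  (hq : forall X, 0 <= q X) (hd : 0 <= d) (m : rat) (r : nat) :
  \sum_X q X = 1 -> 0 <= m ->
  (forall v : sdom A, \sum_X q X * (v \in X)%:R <= m) ->
  (forall f : ssym s, (sar f <= r)%N) ->
  (1 - r%:R * m) * opt A C <= opt (@Bstr s A q d hq hd) C.
Proof.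
move=> hQ hm hv hr.
case: (lerP 0 (1 - r%:R * m)) => hpos; last first.
  apply: le_trans (opt_ge0 _ _); rewrite mulr_le0_ge0 ?opt_ge0 //; exact: ltW.
case: (bigmax_cases (@valA s A C)) => E.
  by rewrite optE E mulr0 opt_ge0.
case: E => hs E; rewrite optE E.
pose ht := [ffun b : Bdom q => hs (val b).2] : {ffun sdom (Bstr hq hd) -> sdom C}.
apply: le_trans (bigmax_ge (@valA s (Bstr hq hd) C) ht); rewrite valB_eq.
apply: (@le_trans _ _ (\sum_X q X * \sum_(f : ssym s) \sum_(u : (sar f).-tuple (sdom A))
    sfun u * (all (fun y => y \notin X) u)%:R * sfun (map_tuple hs u))); last first.
  apply: ler_sum => X _; have [->|hqX] := eqVneq (q X) 0; first by rewrite !mul0r.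
  have hqX' : 0 < q X by rewrite lt0r hqX hq.
  apply: (@ler_wpM2l _ (q X) (hq X)); apply: ler_sum => f _; apply: ler_sum => u _.
  case hall: (all _ _); last first.
    rewrite mulr0 mul0r mulr_ge0 ?mulr_ge0 ?sfun_ge0 ?cw_ge0 //.
    by apply: sumr_ge0 => t _; rewrite mulr_ge0 ?sfun_ge0.
  rewrite /cw hall mulr1; apply: (@ler_wpM2l _ _ (sfun_ge0 _)).
  have [t0 ht0] : exists t : (sar f).-tuple (Bdom q), map val t = map (pair X) u.
    by apply: lift_tuple => // y; move/allP: hall; apply.
  have -> : sfun (map_tuple hs u) = sfun (map_tuple ht t0).
    congr sfun; apply: val_inj => /=.
    have -> : (u : seq _) = map (fun b => (val b).2) t0.
      by rewrite (map_comp snd val) ht0 -map_comp map_id.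
    by rewrite -map_comp; apply/eq_map => b; rewrite /= ffunE.
  apply: (@sum_ge_one _ (fun t : (sar f).-tuple (Bdom q) => map val t == map (pair X) (subX X u))
            (fun t : (sar f).-tuple (Bdom q) => sfun (map_tuple ht t)) t0).
    by rewrite subX_all // ht0.
  by move=> t; apply: sfun_ge0.
under eq_bigr => X _ do rewrite mulr_sumr.
rewrite exchange_big /= /valA mulr_sumr; apply: ler_sum => f _.
under eq_bigr => X _ do rewrite mulr_sumr.
rewrite exchange_big /= mulr_sumr; apply: ler_sum => u _.
apply: (@le_trans _ _ ((\sum_X q X * (all (fun y => y \notin X) u)%:R) * (sfun u * sfun (map_tuple hs u)))).
  have h0 : 0 <= sfun u * sfun (map_tuple hs u) by rewrite mulr_ge0 ?sfun_ge0.
  apply: (@ler_wpM2r _ _ h0).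
  exact: cover_bound.
rewrite mulr_suml; apply: ler_sum => X _.
by rewrite le_eqVlt; apply/orP; left; apply/eqP; rewrite -!mulrA; congr (_ * _); rewrite mulrCA.
Qed.

Lemma mul_pos2 (a b : rat) : 0 <= a -> 0 <= b -> 0 < a * b -> 0 < a /\ 0 < b.
Proof.
move=> ha hb hab; rewrite !lt0r ha hb !andbT; split; apply/eqP => E; move: hab;
  by rewrite E ?mul0r ?mulr0 ltxx.
Qed.

Lemma Bfun_posE s (A : structure s) (q : {ffun {set sdom A} -> rat}) (d : rat)
  (hq : forall X, 0 <= q X) (hd : 0 <= d) f (t : (sar f).-tuple (Bdom q)) :
  0 < @Bfun s A q d f t ->
  exists X (u : (sar f).-tuple (sdom A)),
    [/\ 0 < q X, 0 < sfun u & map val t = map (pair X) (subX X u)].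
Proof.
move=> /sum_pos [].
  by move=> X; rewrite mulr_ge0 // sumr_ge0 // => u _; rewrite !mulr_ge0 ?sfun_ge0 ?cw_ge0.
move=> X /mul_pos2 [] //.
  by apply: sumr_ge0 => u _; rewrite !mulr_ge0 ?sfun_ge0 ?cw_ge0.
move=> hqX /sum_pos [].
  by move=> u; rewrite !mulr_ge0 ?sfun_ge0 ?cw_ge0.
move=> u /mul_pos2 [] //; first by rewrite mulr_ge0 ?sfun_ge0 ?cw_ge0.
move=> /mul_pos2 [] //; rewrite ?sfun_ge0 ?cw_ge0 // => hu _.
case E: (_ == _); first by move=> _; exists X, u; split => //; apply/eqP.
by rewrite ltxx.
Qed.

Lemma Bfun_posI s (A : structure s) (q : {ffun {set sdom A} -> rat}) (d : rat)
  (hq : forall X, 0 <= q X) (hd : 0 < d) f (t : (sar f).-tuple (Bdom q)) X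
  (u : (sar f).-tuple (sdom A)) :
  0 < q X -> 0 < sfun u -> map val t = map (pair X) (subX X u) ->
  0 < @Bfun s A q d f t.
Proof.
move=> hqX hu E.
have hd' : 0 <= d := ltW hd.
have hcw : 0 < cw X u d by rewrite /cw; case: ifP.
apply: (lt_le_trans _ (sum_ge_term X _)); last first.
  move=> Y; apply: mulr_ge0 => //; apply: sumr_ge0 => w _.
  by rewrite !mulr_ge0 ?sfun_ge0 ?cw_ge0.
rewrite mulr_gt0 //.
apply: (lt_le_trans _ (sum_ge_term u _)); last first.
  by move=> w; rewrite !mulr_ge0 ?sfun_ge0 ?cw_ge0.
by rewrite E eqxx mulr1 mulr_gt0.
Qed.

Lemma gaifB_label s (A : structure s) (q : {ffun {set sdom A} -> rat}) (d : rat)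
  (hq : forall X, 0 <= q X) (hd : 0 <= d) (b b' : Bdom q) :
  gaif_rel (A := @Bstr s A q d hq hd) b b' -> (val b).1 = (val b').1.
Proof.
move=> /andP [_ /existsP [f /existsP [t /andP [/andP [hpos hb] hb']]]].
have [X [u [_ _ E]]] := Bfun_posE hq hd hpos.
have lab : forall c : Bdom q, c \in t -> (val c).1 = X.
  move=> c hc; have : val c \in map val t by apply: map_f.
  by rewrite E => /mapP [y _ ->].
by rewrite (lab _ hb) (lab _ hb').
Qed.

Lemma gaifB_same s (A : structure s) (q : {ffun {set sdom A} -> rat}) (d : rat)
  (hq : forall X, 0 <= q X) (hd : 0 <= d) (hdp : 0 < d) (b b' : Bdom q) :
  (val b).1 = (val b').1 ->
  gaif_rel (A := @Bstr s A q d hq hd) b b' = gaif_rel (A := A) (val b).2 (val b').2.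
Proof.
move=> hl.
have neqE : (b != b') = ((val b).2 != (val b').2).
  apply/idP/idP; apply: contra => /eqP E; apply/eqP.
    by apply: val_inj; move: hl E; case: (val b) => ? ?; case: (val b') => ? ? /= -> ->.
  by rewrite E.
apply/idP/idP.
  move=> /andP [hne /existsP [f /existsP [t /andP [/andP [hpos hb] hb']]]].
  have [X [u [_ hu E]]] := Bfun_posE hq hd hpos.
  have inu : forall c : Bdom q, c \in t -> (val c).2 \in u.
    move=> c hc; have : val c \in map val t by apply: map_f.
    by rewrite E => /mapP [y hy ->] /=; apply: subX_mem hy.
  apply/andP; split; first by rewrite -neqE.
  apply/existsP; exists f; apply/existsP; exists u.
  by rewrite hu (inu _ hb) (inu _ hb').
move=> /andP [hne /existsP [f /existsP [u /andP [/andP [hu hb] hb']]]].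
set X := (val b).1.
have hbp := valP b; move/andP: hbp => [hbX hqX].
have hnot := subX_notin hb hbX.
have [t ht] := lift_tuple hnot hqX.
apply/andP; split; first by rewrite neqE.
apply/existsP; exists f; apply/existsP; exists t.
have memt : forall c : Bdom q, (val c).1 = X -> (val c).2 \in u -> c \in t.
  move=> c hc1 hc2; rewrite -(mem_map val_inj) ht.
  have -> : val c = (X, (val c).2) by rewrite -hc1; case: (val c).
  apply: map_f; apply: subX_keep => //.
  by have := valP c; rewrite hc1 => /andP [].
rewrite (Bfun_posI hq hdp hqX hu ht) /= memt // memt //.
Qed.
Lemma rat_approx (R : realType) (x : R) : 0 <= x ->
  exists q : rat, [/\ 0 <= q, ratr q <= x & x / 2 <= ratr q].
Proof.
move=> hx; have [->|hx0] := eqVneq x 0.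
  by exists 0; rewrite rmorph0 mul0r lexx.
have xp : 0 < x by rewrite lt0r hx0 hx.
set N := Num.Def.archi_bound (2 / x).
have hN : 2 / x < N%:R by apply: archi_boundP; rewrite divr_ge0 // ltW.
have hN2 : 2 < x * N%:R by rewrite mulrC -ltr_pdivrMr.
have Np : 0 < (N%:R : R) by apply: lt_trans hN; rewrite divr_gt0.
set z := Num.Def.floor (x * N%:R).
have [hz1 hz2] : (z%:~R <= x * N%:R) /\ (x * N%:R < z%:~R + 1).
  by split; [apply: floor_le | rewrite -intrD1; apply: floorD1_gt].
have z0 : 0 <= z by rewrite floor_ge0 mulr_ge0 // ltW.
exists (z%:~R / N%:R); split.
- by rewrite divr_ge0 // ler0z.
- by rewrite fmorph_div rmorph_int rmorph_nat ler_pdivrMr.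
- rewrite fmorph_div rmorph_int rmorph_nat ler_pdivlMr //. lra.
Qed.

Lemma sum_ind (T : finType) (R : numDomainType) (F : T -> R) (P : pred T) :
  \sum_(X | P X) F X = \sum_X F X * (P X)%:R.
Proof.
rewrite big_mkcond; apply: eq_bigr => X _; case: (P X); by rewrite ?mulr1 ?mulr0.
Qed.

Theorem lemma19 (R : realType) (p : graph -> nat) (AA : struct_class) (r : nat) :
  graph_parameter p ->
  (forall G H : graph, p (disj_union G H) = maxn (p G) (p H)) ->
  (forall s (A : structure s), AA s A -> forall f : ssym s, (sar f <= r)%N) ->
  frac_fragile R p (gaifman_class AA) ->
  pliable R p AA.
Proof.
move=> Hp Hu Har Hfrag eps heps.
set e1 : R := 1 - expR (- eps).
have he1 : 0 < e1 by rewrite /e1 subr_gt0 expR_lt1 oppr_lt0.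
have he1' : e1 <= 1 by rewrite /e1 lerBlDr lerDl expR_ge0.
set e' : R := e1 / (2 * (r.+1)%:R).
have he' : 0 < e' by rewrite divr_gt0 // mulr_gt0 // ltr0n.
have [k Hk] := Hfrag e' he'.
exists k => s A HA.
have GA : gaifman_class AA (gaifman A) by exists s, A.
have [pi [hpi0 hpi1 hpik hpie]] := Hk _ GA.
have [q0f Hq0] := fin_all_exists (fun X => rat_approx (hpi0 X)).
pose q0 := [ffun X => q0f X].
have hq0 : forall X, 0 <= q0 X by move=> X; rewrite ffunE; case: (Hq0 X).
have hq0pi : forall X, ratr (q0 X) <= pi X :> R by move=> X; rewrite ffunE; case: (Hq0 X).
have hq0pi2 : forall X, pi X / 2 <= ratr (q0 X) :> R by move=> X; rewrite ffunE; case: (Hq0 X).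
set Q := \sum_X q0 X.
have hQr : 1 / 2 <= ratr Q :> R.
  rewrite rmorph_sum (_ : 1 / 2 = (\sum_X pi X) / 2); last by rewrite hpi1.
  rewrite mulr_suml; apply: ler_sum => X _; exact: hq0pi2.
have hQp : 0 < Q by rewrite -(ltr_rat R) rmorph0; apply: lt_le_trans hQr; rewrite divr_gt0.
pose q := [ffun X => q0 X / Q].
have hq : forall X, 0 <= q X by move=> X; rewrite ffunE divr_ge0 // ltW.
have hQ : \sum_X q X = 1.
  under eq_bigr => X _ do rewrite ffunE.
  by rewrite -mulr_suml divff // gt_eqF.
have hmarg : forall v, ratr (\sum_X q X * (v \in X)%:R) <= 2 * e' :> R.
  move=> v; rewrite rmorph_sum.
  apply: (@le_trans _ _ ((\sum_X pi X * (v \in X)%:R) * 2)); last first.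
    rewrite -sum_ind mulrC; apply: ler_wpM2l => //; exact: hpie.
  rewrite mulr_suml; apply: ler_sum => X _.
  rewrite rmorphM rmorph_nat ffunE fmorph_div.
  case: (v \in X); rewrite /= ?mulr0 ?mul0r // !mulr1.
  have hQr0 : 0 < ratr Q :> R by apply: lt_le_trans hQr; rewrite divr_gt0.
  rewrite ler_pdivrMr //.
  apply: (le_trans (hq0pi X)).
  have hpX := hpi0 X.
  nra.
pose m := \big[Num.max/0]_v (\sum_X q X * (v \in X)%:R).
have hm0 : 0 <= m := bigmax_ge0 _.
have hmv : forall v, \sum_X q X * (v \in X)%:R <= m := fun v => bigmax_ge _ v.
have hmr : ratr m <= 2 * e' :> R.
  case: (bigmax_cases (fun v => \sum_X q X * (v \in X)%:R)) => [E|[v E]];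
    rewrite /m E ?rmorph0 ?hmarg //.
  by rewrite mulr_ge0 // ltW.
have hmr0 : 0 <= ratr m :> R by rewrite -(ler_rat R) rmorph0 in hm0.
have E2 : 2 * e' * (r.+1)%:R = e1.
  rewrite /e'; field.
  all: try by rewrite ?nat1r ?pnatr_eq0.
have hrS : (r.+1)%:R = r%:R + 1 :> R by rewrite -nat1r addrC.
have hr0 : 0 <= r%:R :> R by [].
have hexp0 : 0 < expR (- eps) := expR_gt0 _.
have hlow : expR (- eps) <= ratr (1 - r%:R * m) :> R.
  rewrite rmorphB rmorph1 rmorphM rmorph_nat.
  have : r%:R * ratr m <= e1 :> R by rewrite -E2 hrS; nra.
  by rewrite /e1; lra.
have hlowp : 0 < 1 - r%:R * m.
  by rewrite -(ltr_rat R) rmorph0; apply: lt_le_trans hlow.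
have hm1 : m < 1.
  rewrite -(ltr_rat R) rmorph1.
  have : 2 * e' <= e1 by rewrite -E2 hrS; nra.
  by move: hmr; rewrite /e1; lra.
have hB : forall v : sdom A, exists X : {set sdom A}, v \notin X /\ 0 < q X.
  move=> v.
  have E' : \sum_X q X * (v \notin X)%:R + \sum_X q X * (v \in X)%:R = 1.
    rewrite -big_split -[RHS]hQ; apply: eq_bigr => X _ /=.
    by case: (v \in X); rewrite /= ?mulr0 ?mulr1 ?addr0 ?add0r.
  have : 0 < \sum_X q X * (v \notin X)%:R.
    have := hmv v; move: hm1 E'; set a := \sum_X q X * (v \notin X)%:R.
    set b := \sum_X q X * (v \in X)%:R; move=> *; lra.
  move/sum_pos => [].
    by move=> X; rewrite mulr_ge0.
  move=> X /mul_pos2 [] // hqX; case hvX: (v \in X); first by rewrite /= ltxx.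
  by move=> _; exists X; rewrite hvX.
pose N := Ncount A.
have hN0 : 0 <= N by apply: sumr_ge0 => f _; apply: sumr_ge0.
have hNr0 : 0 <= ratr N :> R by rewrite -(ler_rat R) rmorph0 in hN0.
pose K := Num.Def.archi_bound (ratr N / eps).
have hK : ratr N / eps < K%:R by apply: archi_boundP; rewrite divr_ge0 // ltW.
pose d : rat := 1 / (K.+1)%:R.
have hd : 0 < d by rewrite divr_gt0 // ltr0n.
have hup : ratr (1 + d * N) <= expR eps :> R.
  rewrite rmorphD rmorph1 rmorphM fmorph_div rmorph1 rmorph_nat.
  apply: le_trans (expR_ge1Dx eps); rewrite lerD2l.
  rewrite mul1r mulrC ler_pdivrMr ?ltr0n //.
  move: hK; rewrite ltr_pdivrMr // => hK.
  have : (K.+1)%:R = K%:R + 1 :> R by rewrite -nat1r addrC.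
  move=> ->; nra.
pose B := Bstr hq (ltW hd).
exists B; split; last first.
  rewrite /d_opt; apply: ge_ereal_sup => x [C ->].
  have up := Bupper C hq (ltW hd) hQ hB.
  have lo := Blower C hq (ltW hd) hQ hm0 hmv (Har s A HA).
  have ha0 := opt_ge0 A C; have hb0 := opt_ge0 B C.
  rewrite /ln_dist.
  case: (eqVneq (opt A C) 0) => [a0|an0]; case: (eqVneq (opt B C) 0) => [b0|bn0] /=.
  - by rewrite lee_fin ltW.
  - exfalso; move: up; rewrite a0 mulr0 => up; move/eqP: bn0; apply; apply/eqP; rewrite eq_le up hb0 //.
  - have : 0 < (1 - r%:R * m) * opt A C by rewrite mulr_gt0 // lt0r an0 ha0.
    by move: lo; rewrite b0 => lo /(lt_le_trans)/(_ lo); rewrite ltxx.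
  rewrite lee_fin ler_norml.
  have hap : 0 < ratr (opt A C) :> R.
    have h : 0 < opt A C by rewrite lt0r an0 ha0.
    by rewrite -(ltr_rat R) rmorph0 in h.
  have hbp : 0 < ratr (opt B C) :> R.
    have h : 0 < opt B C by rewrite lt0r bn0 hb0.
    by rewrite -(ltr_rat R) rmorph0 in h.
  have up' : ratr (opt B C) <= expR eps * ratr (opt A C) :> R.
    apply: le_trans (_ : ratr ((1 + d * N) * opt A C) <= _).
      by rewrite ler_rat.
    by rewrite rmorphM; apply: ler_wpM2r => //; apply: ltW.
  have lo' : expR (- eps) * ratr (opt A C) <= ratr (opt B C) :> R.
    apply: le_trans (_ : ratr ((1 - r%:R * m) * opt A C) <= _); last by rewrite ler_rat.
    by rewrite rmorphM; apply: ler_wpM2r => //; apply: ltW.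
  have hp1 : 0 < expR eps * ratr (opt A C) :> R := mulr_gt0 (expR_gt0 _) hap.
  have hp2 : 0 < expR (- eps) * ratr (opt A C) :> R := mulr_gt0 (expR_gt0 _) hap.
  have l1 : ln (ratr (opt B C)) <= eps + ln (ratr (opt A C)) :> R.
    rewrite -[X in X + _]expRK -lnM ?posrE ?expR_gt0 //.
    by rewrite ler_ln ?posrE.
  have l2 : - eps + ln (ratr (opt A C)) <= ln (ratr (opt B C)) :> R.
    rewrite -[X in X + _]expRK -lnM ?posrE ?expR_gt0 //.
    by rewrite ler_ln ?posrE.
  apply/andP; split; lra.
have hqpi : forall X, 0 < q X -> 0 < pi X.
  move=> X; rewrite ffunE pmulr_lgt0 ?invr_gt0 // => h.
  apply: lt_le_trans (hq0pi X); by rewrite -(ltr_rat R) rmorph0 in h.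
have mkb : forall (X : {set sdom A}) (w : sdom A), w \notin X -> 0 < q X ->
    exists b : Bdom q, val b = (X, w).
  move=> X w hw hqX.
  have hb : ((X, w).2 \notin (X, w).1) && (0 < q (X, w).1) by rewrite /= hw hqX.
  by exists (exist _ (X, w) hb).
case: (pickP (@predT (Bdom q))) => [b0 _|hnone].
  apply: (@p_labels p k _ Hp Hu _ (gaifman B) (fun b : Bdom q => (val b).1) (leqnn _) _ _ b0).
    by move=> x y; apply: gaifB_label.
  move=> x; set X := (val x).1.
  have hqX : 0 < q X by have := valP x; case/andP.
  suff -> : p (del_graph (G := gaifman B) (~: [set y | (val y).1 == X])) =
            p (del_graph (G := gaifman A) X) by apply: hpik; apply: hqpi.
  apply: Hp.
  have fP : forall z : gV (del_graph (G := gaifman B) (~: [set y | (val y).1 == X])),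
      (val (val z)).2 \notin X.
    move=> z; have := valP z; rewrite finset.in_setC inE negbK => /eqP hz.
    by have := valP (val z); rewrite hz => /andP [].
  have fX : forall z : gV (del_graph (G := gaifman B) (~: [set y | (val y).1 == X])),
      (val (val z)).1 = X.
    by move=> z; have := valP z; rewrite finset.in_setC inE negbK => /eqP.
  pose f z := (Sub (val (val z)).2 (fP z) : gV (del_graph (G := gaifman A) X)).
  apply: (@iso_of (del_graph (G := gaifman B) (~: [set y | (val y).1 == X])) (del_graph (G := gaifman A) X) f).
  - move=> z1 z2 /(congr1 val) /= E; apply: val_inj; apply: val_inj.
    by rewrite [LHS]surjective_pairing [RHS]surjective_pairing E !fX.
  - move=> w; have [b hb] := mkb X (val w) (valP w) hqX.
    have hz : b \notin ~: [set y | (val y).1 == X] by rewrite finset.in_setC inE negbK hb.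
    by exists (Sub b hz); apply: val_inj; rewrite /= hb.
  - move=> z1 z2; rewrite /= /del_rel /= gaifB_same //.
    by rewrite (fX z1) (fX z2).
have [X hqX] : exists X, 0 < q X.
  by apply: sum_pos => //; rewrite hQ ltr01.
suff -> : p (gaifman B) = p (del_graph (G := gaifman A) X) by apply: hpik; apply: hqpi.
apply: Hp.
have ff : gV (gaifman B) -> gV (del_graph (G := gaifman A) X).
  by move=> b; exfalso; have := hnone b.
apply: (@iso_of (gaifman B) (del_graph (G := gaifman A) X) ff).
- by move=> b; have := hnone b.
- move=> w; exfalso; have [b _] := mkb X (val w) (valP w) hqX.
  by have := hnone b.
- by move=> b; have := hnone b.
Qed.
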